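(* Let $d_{\mathrm{in}}, d_{\mathrm{out}} \ge 1$, let $\mathbf{U}^{(t)} \in \mathbb{R}^{d_{\mathrm{out}}\times d_{\mathrm{in}}}$ be a fixed matrix (the task vector of task $t$ for a given module), and let $(\mathbf{x}, \mathbf{g}_{\mathbf{y}})$ be a random pair with $\mathbf{x}\in\mathbb{R}^{d_{\mathrm{in}}}$ and $\mathbf{g}_{\mathbf{y}}\in\mathbb{R}^{d_{\mathrm{out}}}$ whose moments below exist. Define the per-sample descent matrix $\mathbf{D}^{(t)} = \mathbf{g}_{\mathbf{y}}\mathbf{x}^{\top}$. Suppose the following three conditions (Assumption 1) hold: (1) $\mathbb{E}[\mathbf{D}^{(t)}] = \rho\,\mathbf{U}^{(t)}$ for some weight decay coefficient $\rho>0$; (2) with $\overline{\mathbf{D}}^{(t)} = \mathbb{E}[\mathbf{D}^{(t)}]$, $\mathbf{C}_t = \mathbb{E}\big[(\mathbf{D}^{(t)}-\overline{\mathbf{D}}^{(t)})^{\top}(\mathbf{D}^{(t)}-\overline{\mathbf{D}}^{(t)})\big]$ and $\mathbf{M}_t = (\overline{\mathbf{D}}^{(t)})^{\top}\overline{\mathbf{D}}^{(t)}$, one has $\cos_F(\mathbf{C}_t,\mathbf{M}_t) > \alpha_t$ for some constant $\alpha_t\in(0,1]$; (3) $\mathbb{E}\big[\|\mathbf{g}_{\mathbf{y}}\|_2^2\,\mathbf{x}\mathbf{x}^{\top}\big] = \mathbb{E}\big[\|\mathbf{g}_{\mathbf{y}}\|_2^2\big]\,\mathbb{E}[\mathbf{x}\mathbf{x}^{\top}]$.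 Then $$\cos_F\!\left(\mathbb{E}[\mathbf{x}\mathbf{x}^{\top}],\ (\mathbf{U}^{(t)})^{\top}\mathbf{U}^{(t)}\right) > \alpha_t .$$
   Context: For matrices $\mathbf{A},\mathbf{B}$ of the same shape, the Frobenius cosine similarity is $\cos_F(\mathbf{A},\mathbf{B}) = \operatorname{Tr}(\mathbf{A}^{\top}\mathbf{B})/(\|\mathbf{A}\|_F\|\mathbf{B}\|_F)$. Interpretation: $\mathbf{U}^{(t)} = \mathbf{W}^{(t)}-\mathbf{W}_{\mathrm{pre}}$ is the difference between fine-tuned and pretrained weights of a linear module, $\mathbf{x}$ is an input activation to the module, $\mathbf{y}=\mathbf{U}^{(t)}\mathbf{x}$ is the residual output, and $\mathbf{g}_{\mathbf{y}} = -\nabla_{\mathbf{y}}\ell$ is the backpropagated negative gradient of the fine-tuning loss $\ell$; the SGD update with $L_2$ regularization is $\delta(\mathbf{U}^{(t)}) = \eta(\mathbf{D}^{(t)} - \rho\mathbf{U}^{(t)})$, so condition (1) is equivalent to $\mathbb{E}[\delta(\mathbf{U}^{(t)})]=\mathbf{0}$. All expectations are with respect to the randomness of mini-batch sampling, conditioned on the fine-tuned checkpoint. *)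

(* Defs.v *)
From HB Require Import structures.
From mathcomp Require Import all_boot all_order all_algebra.
From mathcomp Require Import all_classical all_reals all_analysis.
Set Implicit Arguments. Unset Strict Implicit. Unset Printing Implicit Defensive.
Import Order.TTheory GRing.Theory Num.Theory.
Local Open Scope ring_scope.

Definition frob_norm (R : realType) (m n : nat) (A : 'M[R]_(m, n)) : R :=
  Num.sqrt (\tr (A^T *m A)).

Definition frob_cos (R : realType) (m n : nat) (A B : 'M[R]_(m, n)) : R :=
  \tr (A^T *m B) / (frob_norm A * frob_norm B).

Definition sqnorm (R : realType) (n : nat) (v : 'cV[R]_n) : R :=
  \sum_(i < n) v i ord0 ^+ 2.

(* Real-valued expectation of a real random variable (used under integrability). *)
Definition Ereal d (T : measurableType d) (R : realType) (P : probability T R)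
  (X : T -> R) : R := fine ('E_P[X])%E.

Definition Emx d (T : measurableType d) (R : realType) (P : probability T R)
  (m n : nat) (X : T -> 'M[R]_(m, n)) : 'M[R]_(m, n) :=
  \matrix_(i, j) Ereal P (fun w => X w i j).

Definition rv_integrable d (T : measurableType d) (R : realType)
  (P : probability T R) (X : T -> R) : Prop :=
  P.-integrable setT (fun w => (X w)%:E).

Definition mx_integrable d (T : measurableType d) (R : realType)
  (P : probability T R) (m n : nat) (X : T -> 'M[R]_(m, n)) : Prop :=
  forall i j, rv_integrable P (fun w => X w i j).

(* Main.v *)
Require Import Defs.
From HB Require Import structures.
From mathcomp Require Import all_boot all_order all_algebra.
From mathcomp Require Import all_classical all_reals all_analysis.
From mathcomp Require Import ring lra.
Import Order.TTheory GRing.Theory Num.Theory.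
Local Open Scope ring_scope.

Section Alg.
Variable R : realType.
Variables m n : nat.
Definition ip (A B : 'M[R]_(m, n)) := \tr (A^T *m B).

Lemma ipC A B : ip A B = ip B A.
Proof. by rewrite /ip -mxtrace_tr trmx_mul trmxK. Qed.
Lemma ipDl A B C : ip (A + B) C = ip A C + ip B C.
Proof. by rewrite /ip linearD /= mulmxDl mxtraceD. Qed.
Lemma ipZl a A B : ip (a *: A) B = a * ip A B.
Proof. by rewrite /ip linearZ /= -scalemxAl mxtraceZ. Qed.
Lemma ipDr A B C : ip C (A + B) = ip C A + ip C B.
Proof. by rewrite ipC ipDl ![ip _ C]ipC. Qed.
Lemma ipZr a A B : ip B (a *: A) = a * ip B A.
Proof. by rewrite ipC ipZl ipC. Qed.
Lemma ipNl A B : ip (- A) B = - ip A B.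
Proof. by rewrite -scaleN1r ipZl mulN1r. Qed.
Lemma ipNr A B : ip B (- A) = - ip B A.
Proof. by rewrite -scaleN1r ipZr mulN1r. Qed.
Lemma ip_ge0 A : 0 <= ip A A.
Proof.
rewrite /ip /mxtrace; apply: sumr_ge0 => i _; rewrite !mxE.
apply: sumr_ge0 => k _; rewrite !mxE -expr2; exact: sqr_ge0.
Qed.
Lemma frobE A : frob_norm A = Num.sqrt (ip A A).
Proof. by []. Qed.
Lemma cosE A B : frob_cos A B = ip A B / (Num.sqrt (ip A A) * Num.sqrt (ip B B)).
Proof. by []. Qed.

Lemma CS A B : ip A B ^+ 2 <= ip A A * ip B B.
Proof.
have [B0|Bpos] := eqVneq (ip B B) 0.
  have h t : 0 <= ip A A + 2 * t * ip A B.
    have := ip_ge0 (A + t *: B).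
    rewrite !ipDl !ipDr !ipZl !ipZr B0 (ipC B A); lra.
  have hAB : ip A B = 0.
    have h1 := h (- (ip A A + 1) / 2 / ip A B).
    case: (eqVneq (ip A B) 0) => // nz.
    exfalso; move: h1.
    rewrite -!mulrA mulrCA mulVf //. have := ip_ge0 A. lra.
  by rewrite hAB B0 mulr0 expr0n.
have mpos : 0 < ip B B by rewrite lt_def Bpos ip_ge0.
have := ip_ge0 (ip B B *: A - ip A B *: B).
rewrite !ipDl !ipDr !ipNl !ipNr !ipZl !ipZr (ipC B A) => h.
have : 0 <= ip B B * (ip A A * ip B B - ip A B ^+ 2).
  move: h; rewrite expr2; set a := ip A A; set b := ip B B; set c := ip A B; move=> h; nra.
by rewrite pmulr_rge0 // subr_ge0.
Qed.

Lemma cos_add (C M : 'M[R]_(m, n)) alpha :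
  0 < alpha -> alpha < frob_cos C M -> alpha < frob_cos (C + M) M.
Proof.
rewrite !cosE !ipDl !ipDr (ipC M C).
set s := ip C C; set p := ip C M; set q := ip M M => a0.
have s0 : 0 <= s by exact: ip_ge0.
have q0 : 0 <= q by exact: ip_ge0.
have cs : p ^+ 2 <= s * q by exact: CS.
have [->|spos] := eqVneq s 0.
  by rewrite sqrtr0 mul0r invr0 mulr0 => /(lt_trans a0); rewrite ltxx.
have [qe|qpos] := eqVneq q 0.
  by rewrite qe sqrtr0 mulr0 invr0 mulr0 => /(lt_trans a0); rewrite ltxx.
have sp : 0 < s by rewrite lt_def spos.
have qp : 0 < q by rewrite lt_def qpos.
have ss : 0 < Num.sqrt s by rewrite sqrtr_gt0.
have sq : 0 < Num.sqrt q by rewrite sqrtr_gt0.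
move=> h.
have pp : 0 < p.
  have : 0 < p / (Num.sqrt s * Num.sqrt q) by exact: lt_trans h.
  by rewrite pmulr_lgt0 // invr_gt0 mulr_gt0.
have Xp : 0 < s + p + (p + q) by lra.
have sX : 0 < Num.sqrt (s + p + (p + q)) by rewrite sqrtr_gt0.
apply: (lt_le_trans h).
have key : p * Num.sqrt (s + p + (p + q)) <= (p + q) * Num.sqrt s.
  have pq : 0 <= p + q by lra.
  have e1 : p * Num.sqrt (s + p + (p + q)) = Num.sqrt (p ^+ 2 * (s + p + (p + q))).
    by rewrite sqrtrM ?sqr_ge0 // sqrtr_sqr ger0_norm // ltW.
  have e2 : (p + q) * Num.sqrt s = Num.sqrt ((p + q) ^+ 2 * s).
    by rewrite sqrtrM ?sqr_ge0 // sqrtr_sqr ger0_norm.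
  rewrite e1 e2.
  apply: ler_wsqrtr.
  rewrite !expr2 in cs *. nra.
set a := Num.sqrt s in ss key *; set b := Num.sqrt q in sq *;
set c := Num.sqrt (s + p + (p + q)) in sX key *.
rewrite ler_pdivrMr ?mulr_gt0 // mulrAC ler_pdivlMr ?mulr_gt0 //.
by rewrite !mulrA ler_pM2r.
Qed.

Lemma frob_normZ (a : R) (A : 'M[R]_(m, n)) : 0 <= a -> frob_norm (a *: A) = a * frob_norm A.
Proof.
move=> a0; rewrite !frobE ipZl ipZr mulrA sqrtrM ?mulr_ge0 //.
by rewrite -expr2 sqrtr_sqr ger0_norm.
Qed.

Lemma cosZ (a b : R) (A B : 'M[R]_(m, n)) : 0 < a -> 0 < b -> frob_cos (a *: A) (b *: B) = frob_cos A B.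
Proof.
move=> a0 b0; rewrite /frob_cos -/(ip _ _) -/(ip A B) ipZl ipZr.
rewrite !frob_normZ ?ltW // invfM invfM invfM.
rewrite invfM; set u := (frob_norm A)^-1; set v := (frob_norm B)^-1.
by field; rewrite ?gt_eqF.
Qed.

End Alg.

Section Prob.
Context d (T : measurableType d) (R : realType) (P : probability T R).

Lemma ErealE (X : T -> R) : Ereal P X = Rintegral P setT X.
Proof. by rewrite /Ereal unlock. Qed.

Lemma intD (f h : T -> R) : rv_integrable P f -> rv_integrable P h ->
  rv_integrable P (fun w => f w + h w) /\
  Ereal P (fun w => f w + h w) = Ereal P f + Ereal P h.
Proof.
move=> hf hh; split; first exact: (integrableD measurableT hf hh).
by rewrite !ErealE RintegralD.
Qed.

Lemma intZ (c : R) (f : T -> R) : rv_integrable P f ->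
  rv_integrable P (fun w => c * f w) /\
  Ereal P (fun w => c * f w) = c * Ereal P f.
Proof.
move=> hf; split; first exact: (integrableZl measurableT c hf).
by rewrite !ErealE RintegralZl.
Qed.

Lemma intC (c : R) : rv_integrable P (fun _ => c) /\ Ereal P (fun _ => c) = c.
Proof.
split; first exact: (finite_measure_integrable_cst P c measurableT).
rewrite ErealE Rintegral_cst //.
have h := probability_setT P.
by rewrite -[X in _ * X = _]/(fine (P setT)) h mulr1.
Qed.

Lemma intSum (I : Type) (s : seq I) (f : I -> T -> R) :
  (forall i, rv_integrable P (f i)) ->
  rv_integrable P (fun w => \sum_(i <- s) f i w) /\
  Ereal P (fun w => \sum_(i <- s) f i w) = \sum_(i <- s) Ereal P (f i).
Proof.
move=> hf; elim: s => [|i s [ih1 ih2]].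
  rewrite big_nil; under eq_fun do rewrite big_nil; exact: intC.
rewrite big_cons; under eq_fun do rewrite big_cons.
have [h1 h2] := intD _ _ (hf i) ih1; split => //; by rewrite h2 ih2.
Qed.
End Prob.
Arguments intD {d T R P} f h _ _.
Arguments intZ {d T R P} c f _.
Arguments intC {d T R P} c.

Lemma DtD (R : realType) (din dout : nat) (xv : 'cV[R]_din) (gv : 'cV[R]_dout) :
  (gv *m xv^T)^T *m (gv *m xv^T) = sqnorm gv *: (xv *m xv^T).
Proof.
have e : gv^T *m gv = (sqnorm gv)%:M.
  apply/matrixP => i j; rewrite !ord1 !mxE eqxx mulr1n /sqnorm.
  by apply: eq_bigr => k _; rewrite !mxE expr2.
rewrite trmx_mul trmxK mulmxA -(mulmxA xv) e mul_mx_scalar -scalemxAl.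
by [].
Qed.

Lemma expand (R : realType) (m n : nat) (A B : 'M[R]_(m, n)) :
  A^T *m A = (A - B)^T *m (A - B) + A^T *m B + B^T *m A - B^T *m B.
Proof.
rewrite [(A - B)^T]linearB /= mulmxBl !mulmxBr.
set a := A^T *m A; set b := A^T *m B; set c := B^T *m A; set e := B^T *m B.
apply/matrixP => i j; rewrite !mxE; ring.
Qed.

Theorem theorem1 (d : measure_display) (T : measurableType d) (R : realType)
  (P : probability T R) (din dout : nat) (hin : (0 < din)%N) (hout : (0 < dout)%N)
  (U : 'M[R]_(dout, din)) (x : T -> 'cV[R]_din) (g : T -> 'cV[R]_dout)
  (rho alpha : R) :
  let D := fun w => g w *m (x w)^T in
  let Dbar := Emx P D in
  let C := Emx P (fun w => (D w - Dbar)^T *m (D w - Dbar)) in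
  let M := Dbar^T *m Dbar in
  let Sigma := Emx P (fun w => x w *m (x w)^T) in
  (* existence of the moments involved *)
  mx_integrable P D ->
  mx_integrable P (fun w => (D w - Dbar)^T *m (D w - Dbar)) ->
  mx_integrable P (fun w => x w *m (x w)^T) ->
  mx_integrable P (fun w => sqnorm (g w) *: (x w *m (x w)^T)) ->
  rv_integrable P (fun w => sqnorm (g w)) ->
  (* Assumption 1 *)
  0 < rho -> Dbar = rho *: U ->
  0 < alpha -> alpha <= 1 -> alpha < frob_cos C M ->
  Emx P (fun w => sqnorm (g w) *: (x w *m (x w)^T))
    = Ereal P (fun w => sqnorm (g w)) *: Sigma ->
  alpha < frob_cos Sigma (U^T *m U).
Proof.
move=> D Dbar C M Sigma iD iF iS iG ig rho0 hD a0 a1 hC hE.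
set c := Ereal P (fun w => sqnorm (g w)) in hE.
have hGM : Emx P (fun w => sqnorm (g w) *: (x w *m (x w)^T)) = C + M.
  apply/matrixP => i j.
  rewrite [LHS]mxE [in RHS]mxE [C i j]mxE.
  have ef : (fun w => (sqnorm (g w) *: (x w *m (x w)^T)) i j) =
    (fun w => ((D w - Dbar)^T *m (D w - Dbar)) i j
       + \sum_(k < dout) (Dbar k j * D w k i)
       + \sum_(k < dout) (Dbar k i * D w k j) + (- M i j)).
    apply: funext => w; rewrite -DtD -/(D w) (@expand _ _ _ _ Dbar) !mxE.
    congr (_ + _ + _ - _); apply: eq_bigr => k _; rewrite !mxE mulrC //.
  rewrite ef.
  have [i1 e1] := @intSum _ _ _ P _ (index_enum 'I_dout) (fun k w => Dbar k j * D w k i)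
    (fun k => (intZ (Dbar k j) _ (iD k i)).1).
  have [i2 e2] := @intSum _ _ _ P _ (index_enum 'I_dout) (fun k w => Dbar k i * D w k j)
    (fun k => (intZ (Dbar k i) _ (iD k j)).1).
  have [i3 e3] := intD _ _ (iF i j) i1.
  have [i4 e4] := intD _ _ i3 i2.
  have [i5 e5] := @intC _ _ _ P (- M i j).
  have [i6 e6] := intD _ _ i4 i5.
  rewrite e6 e4 e3 e5 e1 e2.
  have -> : M i j = \sum_(k < dout) Dbar k i * Dbar k j.
    by rewrite mxE; apply: eq_bigr => k _; rewrite mxE.
have eDb k l : Ereal P (fun w => D w k l) = Dbar k l by rewrite /Dbar /Emx mxE.
  have s1 : \sum_(k < dout) Ereal P (fun w => Dbar k j * D w k i) = \sum_(k < dout) Dbar k i * Dbar k j.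
    by apply: eq_bigr => k _; rewrite (intZ _ _ (iD k i)).2 eDb mulrC.
  have s2 : \sum_(k < dout) Ereal P (fun w => Dbar k i * D w k j) = \sum_(k < dout) Dbar k i * Dbar k j.
    by apply: eq_bigr => k _; rewrite (intZ _ _ (iD k j)).2 eDb.
  rewrite s1 s2; ring.
have hM : M = (rho ^+ 2) *: (U^T *m U).
  rewrite /M hD [(rho *: U)^T]linearZ /= -scalemxAl.
  by rewrite -scalemxAr scalerA expr2.
have hCM : c *: Sigma = C + M by rewrite -hE hGM.
have c0 : 0 <= c.
  rewrite /c ErealE; apply: Rintegral_ge0 => w _; rewrite /sqnorm.
  by apply: sumr_ge0 => k _; exact: sqr_ge0.
have key := @cos_add _ _ _ C M alpha a0 hC.
case: (eqVneq c 0) => [ce|cn0].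
  rewrite ce scale0r in hCM; rewrite -hCM in key; move: key.
  by rewrite /frob_cos trmx0 mul0mx mxtrace0 mul0r => /(lt_trans a0); rewrite ltxx.
have cp : 0 < c by rewrite lt_def cn0.
rewrite -(@cosZ _ _ _ c (rho ^+ 2) Sigma (U^T *m U)) ?exprn_gt0 //.
by rewrite hCM -hM.
Qed.
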